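(* For each non-negative integer $\lambda$, there are either no regular Stanley sequences with character $\lambda$, or else infinitely many.
   Context: A set of non-negative integers is 3-free if no three of its elements form an arithmetic progression. For a finite 3-free set $A=\{a_0<\cdots<a_k\}$ of non-negative integers, the Stanley sequence $S(A)=(a_n)_{n\ge0}$ is the increasing sequence with initial terms $a_0,\ldots,a_k$ in which each subsequent $a_{n+1}$ is the smallest integer greater than $a_n$ such that $\{a_0,\ldots,a_{n+1}\}$ is 3-free. Throughout, Stanley sequences are in root position ($a_0=0$). A Stanley sequence $(a_n)$ is independent with character $\lambda$ if for all sufficiently large $k$: $a_{2^k+i}=a_{2^k}+a_i$ for $0\le i<2^k$, and $a_{2^k}=2a_{2^k-1}-\lambda+1$. A Stanley sequence $(a_n)$ is regular with character $\lambda$ if there exist a constant $\sigma$ and an independent Stanley sequence $(a'_n)$ of character $\lambda$ such that for all large $k$ and $0\le i<2^k$: $a_{2^k-\sigma+i}=a_{2^k-\sigma}+a'_i$ and $a_{2^k-\sigma}=2a_{2^k-\sigma-1}-\lambda+1$ (these data are unique). *)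

(* Defs.v *)
From mathcomp Require Import all_boot all_order all_algebra.
Set Implicit Arguments. Unset Strict Implicit. Unset Printing Implicit Defensive.
Import GRing.Theory Num.Theory.

Definition three_free (S : nat -> Prop) : Prop :=
  forall x y z, S x -> S y -> S z -> x < y -> y < z -> x + z <> 2 * y.

Definition prefix_set (a : nat -> nat) (n : nat) : nat -> Prop :=
  fun x => exists2 i, i <= n & a i = x.

Definition prefix_set_with (a : nat -> nat) (n m : nat) : nat -> Prop :=
  fun x => prefix_set a n x \/ x = m.

(** [a] is a Stanley sequence S(A) in root position, for the finite 3-free
    set A = {a_0 < ... < a_k}: a_0 = 0, the initial terms are increasing and
    3-free, and for every n >= k, a_{n+1} is the smallest integer > a_n such
    that {a_0, ..., a_{n+1}} is 3-free. *)
Definition stanley (a : nat -> nat) : Prop :=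
  a 0 = 0 /\
  exists k : nat,
    (forall i, i < k -> a i < a i.+1) /\
    three_free (prefix_set a k) /\
    (forall n, k <= n ->
       [/\ a n < a n.+1,
           three_free (prefix_set a n.+1) &
           forall m, a n < m -> m < a n.+1 -> ~ three_free (prefix_set_with a n m)]).

Definition independent (a : nat -> nat) (lam : int) : Prop :=
  stanley a /\
  exists K : nat, forall k, K <= k ->
    (forall i, i < 2 ^ k -> a (2 ^ k + i) = a (2 ^ k) + a i) /\
    ((a (2 ^ k)%N)%:Z = 2 * (a (2 ^ k - 1)%N)%:Z - lam + 1)%R.

(** Index 2^k - sigma + i (as a natural number; for large k it is non-negative). *)
Definition ridx (k : nat) (sigma : int) (i : int) : nat :=
  absz ((2 ^ k)%N%:Z - sigma + i)%R.

Definition regular (a : nat -> nat) (lam : int) : Prop :=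
  stanley a /\
  exists (sigma : int) (a' : nat -> nat),
    independent a' lam /\
    exists K : nat, forall k, K <= k ->
      (0 <= (2 ^ k)%N%:Z - sigma - 1)%R /\
      (forall i : nat, i < 2 ^ k ->
         a (ridx k sigma (Posz i)) = a (ridx k sigma 0) + a' i) /\
      ((a (ridx k sigma 0))%:Z = 2 * (a (ridx k sigma (-1)))%:Z - lam + 1)%R.

(* Main.v *)
Require Import Defs.
From mathcomp Require Import all_boot all_order all_algebra.
From Stdlib Require Import List.
From mathcomp Require Import zify.
From Stdlib Require Import Classical.
Import GRing.Theory Num.Theory.

Record IData (a : nat -> nat) (lam K k0 : nat) : Prop := {
  ia0 : a 0 = 0;
  iinc : forall i, a i < a i.+1;
  i3f : forall i j l, i < j -> j < l -> a i + a l <> 2 * a j;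
  igap : forall p x, k0 <= p -> a p < x -> x < a p.+1 ->
           exists i j, i < j /\ j <= p /\ a i + x = 2 * a j;
  iblk : forall k i, K <= k -> i < 2 ^ k -> a (2 ^ k + i) = a (2 ^ k) + a i;
  ichr : forall k, K <= k -> a (2 ^ k) + lam = 2 * a (2 ^ k - 1) + 1 }.

Arguments ia0 {a lam K k0}.
Arguments iinc {a lam K k0}.
Arguments i3f {a lam K k0}.
Arguments igap {a lam K k0}.
Arguments iblk {a lam K k0}.
Arguments ichr {a lam K k0}.

Lemma mono_lt (f : nat -> nat) : (forall i, f i < f i.+1) ->
  forall i j, i < j -> f i < f j.
Proof.
move=> h i j; elim: j => // j ih; rewrite ltnS leq_eqVlt => /orP [/eqP -> //|/ih].
move=> lt; exact: (ltn_trans lt (h j)).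
Qed.

Arguments mono_lt {f} h {i j}.

Lemma mono_le (f : nat -> nat) : (forall i, f i < f i.+1) ->
  forall i j, i <= j -> f i <= f j.
Proof.
move=> h i j; rewrite leq_eqVlt => /orP [/eqP -> //|lt].
by have := mono_lt h lt; lia.
Qed.

Arguments mono_le {f} h {i j}.

Lemma mono_rev (f : nat -> nat) : (forall i, f i < f i.+1) ->
  forall i j, f i < f j -> i < j.
Proof.
move=> h i j lt; rewrite ltnNge; apply/negP => le.
have := mono_le h le; lia.
Qed.

Arguments mono_rev {f} h {i j}.

Lemma stanley_data (a : nat -> nat) : stanley a ->
  exists k0, [/\ a 0 = 0, (forall i, a i < a i.+1),
     (forall i j l, i < j -> j < l -> a i + a l <> 2 * a j) &
     (forall p x, k0 <= p -> a p < x -> x < a p.+1 ->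
           exists i j, i < j /\ j <= p /\ a i + x = 2 * a j)].
Proof.
case=> a0 [k0 [hinc [h3 hst]]].
have inc : forall i, a i < a i.+1.
  move=> i; case: (ltnP i k0) => hi; first exact: hinc.
  by case: (hst i hi).
have pf : forall p, k0 <= p -> three_free (prefix_set a p).
  move=> p; case: p => [|p]; first by rewrite leqn0 => /eqP <-.
  rewrite leq_eqVlt => /orP [/eqP <- //|]; rewrite ltnS => hp.
  by case: (hst p hp).
exists k0; split => //.
- move=> i j l ij jl e.
  have := pf (maxn l k0) (leq_maxr _ _).
  move=> /(_ (a i) (a j) (a l)).
  have hi : prefix_set a (maxn l k0) (a i).
    by exists i => //; apply: leq_trans (leq_maxl _ _); lia.
  have hj : prefix_set a (maxn l k0) (a j).
    by exists j => //; apply: leq_trans (leq_maxl _ _); lia.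
  have hl : prefix_set a (maxn l k0) (a l) by exists l => //; exact: leq_maxl.
  move=> /(_ hi hj hl (mono_lt inc ij) (mono_lt inc jl)); apply.
  by rewrite e.
- move=> p x hp h1 h2.
  case: (hst p hp) => _ _ /(_ x h1 h2) nf.
  apply: NNPP => nex; apply: nf => y1 y2 y3 [Y1|Y1] [Y2|Y2] [Y3|Y3] l12 l23 e.
  + case: Y1 Y2 Y3 => [i1 hi1 e1] [i2 hi2 e2] [i3 hi3 e3]; subst y1 y2 y3.
    have := (pf p hp (a i1) (a i2) (a i3)).
    move=> /(_ (ex_intro2 _ _ i1 hi1 erefl) (ex_intro2 _ _ i2 hi2 erefl) (ex_intro2 _ _ i3 hi3 erefl) l12 l23); apply.
    exact: e.
  + case: Y1 Y2 => [i1 hi1 e1] [i2 hi2 e2]; subst y3.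
    apply: nex; exists i1, i2; split; last split => //.
    * by apply: (mono_rev inc); rewrite e1 e2.
    * by rewrite e1 e2; lia.
  + case: Y3 => [i3 hi3 e3]; have := mono_le inc hi3; lia.
  + lia.
  + case: Y2 Y3 => [i2 hi2 e2] [i3 hi3 e3]; have := mono_le inc hi3; lia.
  + lia.
  + case: Y3 => [i3 hi3 e3]; have := mono_le inc hi3; lia.
  + lia.
Qed.

Lemma indep_data (a : nat -> nat) (lam : nat) : independent a (Posz lam) ->
  exists K k0, IData a lam K k0.
Proof.
case=> /stanley_data [k0 [a0 inc h3 hg]] [K hK].
exists K, k0; split => //.
- by move=> k i hk hi; case: (hK k hk) => /(_ i hi).
- move=> k hk; case: (hK k hk) => _ e; lia.
Qed.

Set Implicit Arguments.


Lemma exp_pos k : 0 < 2 ^ k.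
Proof. by rewrite expn_gt0. Qed.

Lemma expS2 k : 2 ^ k.+1 = 2 ^ k + 2 ^ k.
Proof. by rewrite expnS mul2n addnn. Qed.

Lemma exp_mono k l : k <= l -> 2 ^ k <= 2 ^ l.
Proof. by move=> h; rewrite leq_exp2l. Qed.

Lemma exp_gt k : k < 2 ^ k.
Proof. exact: ltn_expl. Qed.

Section A.
Variables (a : nat -> nat) (lam K k0 : nat).
Hypothesis H : IData a lam K k0.

Lemma a_inc : forall i, a i < a i.+1. Proof. exact: (iinc H). Qed.
Lemma a_lt i j : i < j -> a i < a j. Proof. by move=> h; apply: (mono_lt a_inc h). Qed.
Lemma a_le i j : i <= j -> a i <= a j. Proof. by move=> h; apply: (mono_le a_inc h). Qed.
Lemma a_rev i j : a i < a j -> i < j. Proof. by move=> h; apply: (mono_rev a_inc h). Qed.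

Lemma a_ge i : i <= a i.
Proof. elim: i => // i ih; have := a_inc i; lia. Qed.

Lemma a_blk k i : K <= k -> i < 2 ^ k -> a (2 ^ k + i) = a (2 ^ k) + a i.
Proof. exact: (iblk H k i). Qed.

Lemma a_chr k : K <= k -> a (2 ^ k) + lam = 2 * a (2 ^ k - 1) + 1.
Proof. exact: (ichr H k). Qed.

Lemma a_m k : K <= k -> a (2 ^ k.+1 - 1) = a (2 ^ k) + a (2 ^ k - 1).
Proof.
move=> hk; have e : 2 ^ k.+1 - 1 = 2 ^ k + (2 ^ k - 1).
  by rewrite expS2; have := exp_pos k; lia.
rewrite e a_blk //; have := exp_pos k; lia.
Qed.

Lemma a_c3 k : K <= k -> a (2 ^ k.+1) = 3 * a (2 ^ k).
Proof.
move=> hk; have h1 := a_chr k.+1 (leqW hk); have h2 := a_chr k hk; have h3 := a_m k hk.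
lia.
Qed.

Lemma a_mc k : a (2 ^ k - 1) < a (2 ^ k).
Proof. apply: a_lt; have := exp_pos k; lia. Qed.

Lemma locate s : exists v, a v <= s < a v.+1.
Proof.
elim: s => [|s [v /andP [h1 h2]]].
  by exists 0; rewrite (ia0 H) /=; have := a_inc 0; rewrite (ia0 H).
case: (ltnP s.+1 (a v.+1)) => h3.
  by exists v; apply/andP; split => //; lia.
exists v.+1; apply/andP; split; first lia.
have := a_inc v.+1; lia.
Qed.

Variable J : nat.
Hypothesis hJK : K <= J.
Hypothesis hJk : k0 < 2 ^ J.
Hypothesis hJm : a k0 + lam < a (2 ^ J - 1).

Lemma mm_mono k : J <= k -> a (2 ^ J - 1) <= a (2 ^ k - 1).
Proof. move=> h; apply: a_le; have := exp_mono J k h; lia. Qed.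

Definition dl (j : nat) := a (2 ^ j - 1) - a (2 ^ J.+1 - 1).

Lemma EL_base s : s < a (2 ^ J.+1) ->
  exists z y, z < 2 ^ J.+1 /\ y < 2 ^ J.+1 /\ 2 * a z = a y + s.
Proof.
move=> hs; have [v /andP [hv1 hv2]] := locate s.
have vlt : v < 2 ^ J.+1 by apply: a_rev; lia.
case: (ltnP (a v) s) => hvs; last first.
  by exists v, v; split => //; split => //; lia.
case: (leqP k0 v) => hk0.
  have [i [j [ij [jv e]]]] := igap H v s hk0 hvs hv2.
  exists j, i; split; first lia; split; first lia; lia.
have vJ : v.+1 < 2 ^ J by lia.
have e1 : a (2 ^ J + v) = a (2 ^ J) + a v by apply: a_blk; lia.
have e2 : a (2 ^ J + v).+1 = a (2 ^ J) + a v.+1 by rewrite -addnS a_blk.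
have hp : k0 <= 2 ^ J + v by lia.
have [i [j [ij [jv e]]]] := igap H (2 ^ J + v) (a (2 ^ J) + s) hp (ltac:(lia)) (ltac:(lia)).
have hS := expS2 J.
case: (leqP (2 ^ J) j) => hj.
  have ej : a j = a (2 ^ J) + a (j - 2 ^ J).
    by rewrite -a_blk //; [congr a; lia | lia].
  case: (leqP (2 ^ J) i) => hi.
    have ei : a i = a (2 ^ J) + a (i - 2 ^ J).
      by rewrite -a_blk //; [congr a; lia | lia].
    exists (j - 2 ^ J), (i - 2 ^ J); split; first lia; split; first lia; lia.
  exfalso.
  have hai : a i <= a (2 ^ J - 1) by apply: a_le; lia.
  have hak : a v.+1 <= a k0 by apply: a_le.
  have := a_chr J hJK; lia.
exists j, (2 ^ J + i); split; first lia; split; first lia.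
rewrite a_blk //; lia.
Qed.

Lemma EL j : J.+1 <= j -> forall s, s < a (2 ^ j) + dl j ->
  exists z y, z < 2 ^ j /\ y < 2 ^ j /\ 2 * a z + dl j = a y + s.
Proof.
move=> hj; rewrite -(subnKC hj); elim: (j - J.+1) => [|d ih] s.
  rewrite addn0 /dl subnn !addn0 => hs; have [z [y [h1 [h2 h3]]]] := EL_base s hs; exists z, y; lia.
rewrite addnS; set j' := J.+1 + d in ih *.
have hK : K <= j' by rewrite /j'; lia.
have ec := a_c3 j' hK; have em := a_m j' hK.
have hmm : a (2 ^ J.+1 - 1) <= a (2 ^ j' - 1).
  have := exp_mono J.+1 j' (ltac:(rewrite /j'; lia)); have := exp_pos J.+1; move=> *; apply: a_le; lia.
have edl : dl j'.+1 = a (2 ^ j') + dl j' by rewrite /dl em; lia.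
have hS := expS2 j'.
rewrite edl ec => hs.
case: (ltnP s (a (2 ^ j') + dl j')) => h1.
  have [z [y [hz [hy e]]]] := ih s h1.
  exists z, (2 ^ j' + y). split; first lia; split; first lia.
  rewrite a_blk //; lia.
case: (ltnP s (2 * a (2 ^ j') + dl j')) => h2.
  have [z [y [hz [hy e]]]] := ih (s - a (2 ^ j')) (ltac:(lia)).
  exists z, y; split; first lia; split; first lia; lia.
case: (ltnP s (3 * a (2 ^ j') + dl j')) => h3.
  have [z [y [hz [hy e]]]] := ih (s - 2 * a (2 ^ j')) (ltac:(lia)).
  exists (2 ^ j' + z), (2 ^ j' + y); split; first lia; split; first lia.
  rewrite !a_blk //; lia.
have [z [y [hz [hy e]]]] := ih (s - 3 * a (2 ^ j')) (ltac:(lia)).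
exists (2 ^ j' + z), y; split; first lia; split; first lia.
rewrite !a_blk //; lia.
Qed.

End A.


Definition wgt (n j : nat) : nat := if j < 2 ^ n then 0 else 2 ^ (trunc_log 2 j - n).
Definition bseq (a : nat -> nat) (u n j : nat) : nat := a j + u * wgt n j.

Lemma wgt_low n j : j < 2 ^ n -> wgt n j = 0.
Proof. by rewrite /wgt => ->. Qed.

Lemma wgt_blk n k i : n <= k -> i < 2 ^ k -> wgt n (2 ^ k + i) = 2 ^ (k - n).
Proof.
move=> nk ik; rewrite /wgt.
have := exp_mono n k nk => h.
have -> : (2 ^ k + i < 2 ^ n) = false by apply/negbTE; rewrite -leqNgt; lia.
rewrite (@trunc_log_eq 2 k) //; apply/andP; split; first lia.
by rewrite expS2; lia.
Qed.

Lemma wgt_mono n x y : x <= y -> wgt n x <= wgt n y.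
Proof.
move=> xy; rewrite /wgt; case: ifP => hx; case: ifP => hy //; first lia.
rewrite leq_exp2l //; have := leq_trunc_log 2 xy; lia.
Qed.

Lemma decomp n l : 2 ^ n <= l -> exists k v, [/\ n <= k, v < 2 ^ k & l = 2 ^ k + v].
Proof.
move=> hl; have l0 : 0 < l by have := exp_pos n; lia.
exists (trunc_log 2 l), (l - 2 ^ trunc_log 2 l).
have h1 := @trunc_logP 2 l (erefl _) l0.
have h2 := @trunc_log_ltn 2 l (erefl _).
have h3 := @trunc_log_max 2 l n (erefl _) hl.
split => //; last lia.
move: h2; rewrite expS2; lia.
Qed.

Section B.
Variables (a : nat -> nat) (lam K k0 : nat).
Hypothesis H : IData a lam K k0.
Variable J : nat.
Hypothesis hJK : K <= J.
Hypothesis hJk : k0 < 2 ^ J.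
Hypothesis hJm : a k0 + lam < a (2 ^ J - 1).
Variables (n u : nat).
Hypothesis hn : J.+2 <= n.
Hypothesis hu1 : lam < u.
Hypothesis hu2 : u <= dl a J n.

Let b := bseq a u n.
Let U k := u * 2 ^ (k - n).

Let ainc := a_inc H.

Lemma b_low j : j < 2 ^ n -> b j = a j.
Proof. by move=> h; rewrite /b /bseq wgt_low // muln0 addn0. Qed.

Lemma b_blk k i : n <= k -> i < 2 ^ k -> b (2 ^ k + i) = a (2 ^ k) + U k + a i.
Proof.
move=> nk ik; rewrite /b /bseq wgt_blk // (a_blk H) //; rewrite /U; lia.
Qed.

Lemma b_inc i : b i < b i.+1.
Proof.
rewrite /b /bseq; have := ainc i; have := @wgt_mono n i i.+1 (leqnSn i).
move=> h1 h2; have := leq_mul (leqnn u) h1; lia.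
Qed.

Lemma b_lt i j : i < j -> b i < b j. Proof. by move=> h; apply: (mono_lt b_inc h). Qed.
Lemma b_le i j : i <= j -> b i <= b j. Proof. by move=> h; apply: (mono_le b_inc h). Qed.
Lemma b_rev i j : b i < b j -> i < j. Proof. by move=> h; apply: (mono_rev b_inc h). Qed.

Lemma U_S k : n <= k -> U k.+1 = 2 * U k.
Proof. by move=> h; rewrite /U subSn // expnS; lia. Qed.

Lemma U_n : U n = u.
Proof. by rewrite /U subnn expn0 muln1. Qed.

Lemma kK k : n <= k -> K <= k.
Proof. lia. Qed.

Lemma mmJ k : J <= k -> a k0 + lam < a (2 ^ k - 1).
Proof. move=> h; have := mm_mono H J hJK hJk hJm k h; lia. Qed.

Lemma dU k : n <= k -> U k <= dl a J k.
Proof.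
move=> hk; rewrite -(subnKC hk); elim: (k - n) => [|d ih].
  by rewrite addn0 U_n.
rewrite addnS U_S; last lia.
have hK : K <= n + d by lia.
have em := a_m H (n + d) hK.
have hc := a_mc H (n + d).
have hmm : a (2 ^ J.+1 - 1) <= a (2 ^ (n + d) - 1).
  have := exp_mono J.+1 (n + d) (ltac:(lia)); have := exp_pos J.+1; move=> *; apply: (a_le H); lia.
move: ih; rewrite /dl em; lia.
Qed.

Lemma DL k : n <= k -> forall s, s < a (2 ^ k) + U k ->
  exists z i, z < 2 ^ k /\ i < 2 ^ k /\ 2 * a z + U k = b i + s.
Proof.
move=> hk; rewrite -(subnKC hk); elim: (k - n) => [|d ih] s.
  rewrite addn0 U_n => hs.
  have hn1 : J.+1 <= n by lia.
  have [z [y [hz [hy e]]]] := EL H J hJK hJk hJm n hn1 (s + dl a J n - u) (ltac:(lia)).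
  by exists z, y; split => //; split => //; rewrite b_low //; lia.
rewrite addnS; set k' := n + d in ih *.
have nk : n <= k' by rewrite /k'; lia.
have hK : K <= k' by lia.
have ec := a_c3 H k' hK.
have hS := expS2 k'.
have hU := U_S k' nk.
have hdu := dU k' nk.
have hmc := a_mc H k'.
have hdl : dl a J k' <= a (2 ^ k' - 1) by rewrite /dl; lia.
have hk1 : J.+1 <= k' by lia.
rewrite ec hU => hs.
case: (ltnP s (U k')) => h1.
  have [z [y [hz [hy e]]]] := EL H J hJK hJk hJm k' hk1 (a (2 ^ k') + s - U k' + dl a J k') (ltac:(lia)).
  exists z, (2 ^ k' + y); split; first lia; split; first lia.
  rewrite b_blk //; lia.
case: (ltnP s (a (2 ^ k') + 2 * U k')) => h2.
  have [z [i [hz [hi e]]]] := ih (s - U k') (ltac:(lia)).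
  exists z, i; split; first lia; split; first lia; lia.
case: (ltnP s (2 * a (2 ^ k') + U k')) => h3.
  have [z [y [hz [hy e]]]] := EL H J hJK hJk hJm k' hk1 (s - a (2 ^ k') - U k' + dl a J k') (ltac:(lia)).
  exists (2 ^ k' + z), (2 ^ k' + y); split; first lia; split; first lia.
  rewrite b_blk // (a_blk H) //; lia.
have [z [i [hz [hi e]]]] := ih (s - 2 * a (2 ^ k') - U k') (ltac:(lia)).
exists (2 ^ k' + z), i; split; first lia; split; first lia.
rewrite (a_blk H) //; lia.
Qed.


Lemma hchr k : n <= k -> a (2 ^ k) + lam = 2 * a (2 ^ k - 1) + 1.
Proof. move=> h; exact: (a_chr H k (kK k h)). Qed.

Lemma bm1 k : n <= k -> b (2 ^ k.+1 - 1) = a (2 ^ k) + U k + a (2 ^ k - 1).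
Proof.
move=> h; have e : 2 ^ k.+1 - 1 = 2 ^ k + (2 ^ k - 1).
  by rewrite expS2; have := exp_pos k; lia.
rewrite e b_blk //; have := exp_pos k; lia.
Qed.

Lemma b_pow k : n <= k -> b (2 ^ k) = a (2 ^ k) + U k.
Proof.
move=> h; have := b_blk k 0 h (exp_pos k); rewrite addn0 (ia0 H) addn0; exact.
Qed.

Lemma hUge k : n <= k -> u <= U k.
Proof.
move=> _; rewrite /U; have := exp_pos (k - n); move=> h0; have := leq_mul (leqnn u) h0; lia.
Qed.

Lemma b3f i j l : i < j -> j < l -> b i + b l <> 2 * b j.
Proof.
move=> ij jl e.
case: (ltnP l (2 ^ n)) => hl.
  rewrite !b_low in e; try lia.
  exact: (i3f H i j l ij jl e).
have [k [v [nk hv el]]] := decomp n l hl; subst l.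
have hK := kK k nk.
have ec := hchr k nk.
have hmc := a_mc H k.
have hS := expS2 k.
have hav : a v <= a (2 ^ k - 1) by apply: (a_le H); lia.
have hU1 : u <= U k.
  rewrite /U; have := exp_pos (k - n); move=> h0; have := leq_mul (leqnn u) h0; lia.
rewrite b_blk // in e.
case: (leqP (2 ^ k) j) => hj.
  have ej : b j = a (2 ^ k) + U k + a (j - 2 ^ k).
    by rewrite -b_blk //; [congr b; lia | lia ..].
  case: (leqP (2 ^ k) i) => hi.
    have ei : b i = a (2 ^ k) + U k + a (i - 2 ^ k).
      by rewrite -b_blk //; [congr b; lia | lia ..].
    apply: (i3f H (i - 2 ^ k) (j - 2 ^ k) v) => //; lia.
  have hbi : b i <= b (2 ^ k - 1) by apply: b_le; lia.
  move: nk; rewrite leq_eqVlt => /orP [/eqP ekn|nk'].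
    subst k; rewrite (b_low (2 ^ n - 1)) in hbi; last by have := exp_pos n; lia.
    lia.
  case: k nk' hK ec hmc hS hav hU1 e hj ej hi hbi hv hl jl => // k' nk' hK ec hmc hS hav hU1 e hj ej hi hbi hv hl jl.
  have nk1 : n <= k' by lia.
  rewrite bm1 // in hbi.
  have := a_c3 H k' (kK k' nk1); have := a_m H k' (kK k' nk1); have := U_S k' nk1;
  have := hchr k' nk1; have := hUge k' nk1; lia.
move: nk; rewrite leq_eqVlt => /orP [/eqP ekn|nk'].
  subst k; rewrite !b_low in e; try lia.
  have : a j <= a (2 ^ n - 1) by apply: (a_le H); lia.
  rewrite U_n in e hU1; lia.
case: k nk' hK ec hmc hS hav hU1 e hj hv hl jl => // k' nk' hK ec hmc hS hav hU1 e hj hv hl jl.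
have nk1 : n <= k' by lia.
have e3 := a_c3 H k' (kK k' nk1); have em := a_m H k' (kK k' nk1); have eu := U_S k' nk1.
have ec' := hchr k' nk1.
have hS' := expS2 k'.
case: (ltnP j (2 ^ k')) => hj'.
  have : b j < b (2 ^ k') by apply: b_lt.
  rewrite b_pow //; lia.
have ej : b j = a (2 ^ k') + U k' + a (j - 2 ^ k').
  by rewrite -b_blk //; [congr b; lia | lia ..].
have hz : a (j - 2 ^ k') <= a (2 ^ k' - 1) by apply: (a_le H); lia.
have hi : i < 2 ^ n.
  apply: b_rev; rewrite b_pow // U_n; lia.
rewrite b_low // in e.
have hnk : 2 ^ n <= 2 ^ k' := exp_mono n k' nk1.
apply: (i3f H i (2 ^ k' + (j - 2 ^ k')) (2 ^ k'.+1 + v)); try lia.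
rewrite !(a_blk H) //; try lia.
Qed.

Lemma bgap p x : 2 ^ n.+1 - 1 <= p -> b p < x -> x < b p.+1 ->
  exists i j, i < j /\ j <= p /\ b i + x = 2 * b j.
Proof.
move=> hp h1 h2.
have hSn := expS2 n.
have [k [v [nk hv ep]]] := decomp n p.+1 (ltac:(have := exp_pos n; lia)).
have hK := kK k nk.
have hS := expS2 k.
have hnk : n < k.
  rewrite ltn_neqAle nk andbT; apply/negP => /eqP ekn; subst k; lia.
case: k nk hnk hK hS ep hv => // k' nk hnk hK hS ep hv.
have nk1 : n <= k' by lia.
have e3 := a_c3 H k' (kK k' nk1); have em := a_m H k' (kK k' nk1); have eu := U_S k' nk1.
have ec' := hchr k' nk1; have ec := hchr k'.+1 nk.
have hS' := expS2 k'.
have hmc := a_mc H k'.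
have hkJ : J <= k' by lia.
have hm' := mmJ k' hkJ.
have hmk := mmJ k'.+1 (ltac:(lia) : J <= k'.+1).
have hnk' : 2 ^ n <= 2 ^ k' := exp_mono n k' nk1.
have hJk' : 2 ^ J <= 2 ^ k' := exp_mono J k' hkJ.
case: v hv ep => [|v] hv ep.
  have epp : p = 2 ^ k' + (2 ^ k' - 1) by lia.
  rewrite epp b_blk // in h1; last lia.
  rewrite ep addn0 b_pow // in h2.
  case: (ltnP (x - (a (2 ^ k') + U k')) (a (2 ^ k'))) => hw.
    have hk0 : k0 <= 2 ^ k' - 1 by lia.
    have hpa : (2 ^ k' - 1).+1 = 2 ^ k' by have := exp_pos k'; lia.
    have [i [j [ij [jv e]]]] := igap H (2 ^ k' - 1) (x - (a (2 ^ k') + U k')) hk0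
        (ltac:(lia)) (ltac:(rewrite hpa; lia)).
    exists (2 ^ k' + i), (2 ^ k' + j); split; first lia; split; first lia.
    rewrite !b_blk //; lia.
  have [z [i [hz [hi e]]]] := DL k' nk1 (x - (a (2 ^ k') + U k') - a (2 ^ k')) (ltac:(lia)).
  exists i, (2 ^ k' + z); split; first lia; split; first lia.
  rewrite b_blk //; lia.
have epp : p = 2 ^ k'.+1 + v by lia.
have hv' : v < 2 ^ k'.+1 by lia.
rewrite epp b_blk // in h1.
rewrite ep b_blk // in h2.
set g := x - (a (2 ^ k'.+1) + U k'.+1).
case: (leqP k0 v) => hk0.
  have [i [j [ij [jv e]]]] := igap H v g hk0 (ltac:(rewrite /g; lia)) (ltac:(rewrite /g; lia)).
  exists (2 ^ k'.+1 + i), (2 ^ k'.+1 + j); split; first lia; split; first lia.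
  move: e; rewrite /g => e.
  rewrite !b_blk //; lia.
have hpa : k0 <= 2 ^ k'.+1 + v by lia.
have ea1 : a (2 ^ k'.+1 + v) = a (2 ^ k'.+1) + a v by rewrite (a_blk H).
have ea2 : a (2 ^ k'.+1 + v).+1 = a (2 ^ k'.+1) + a v.+1 by rewrite -addnS (a_blk H).
have [i [j [ij [jv e]]]] := igap H (2 ^ k'.+1 + v) (a (2 ^ k'.+1) + g) hpa
    (ltac:(rewrite ea1 /g; lia)) (ltac:(rewrite ea2 /g; lia)).
have hg : g < a k0.
  have : a v.+1 <= a k0 by apply: (a_le H).
  rewrite /g; lia.
case: (leqP (2 ^ k'.+1) j) => hj.
  have ej : a j = a (2 ^ k'.+1) + a (j - 2 ^ k'.+1).
    by rewrite -(a_blk H) //; [congr a; lia | lia ..].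
  case: (leqP (2 ^ k'.+1) i) => hi.
    have ei : a i = a (2 ^ k'.+1) + a (i - 2 ^ k'.+1).
      by rewrite -(a_blk H) //; [congr a; lia | lia ..].
    exists i, j; split; first lia; split; first lia.
    have -> : i = 2 ^ k'.+1 + (i - 2 ^ k'.+1) by lia.
    have -> : j = 2 ^ k'.+1 + (j - 2 ^ k'.+1) by lia.
    move: e; rewrite /g => e.
    rewrite !b_blk //; lia.
  exfalso.
  have : a i <= a (2 ^ k'.+1 - 1) by apply: (a_le H); lia.
  lia.
case: (ltnP j (2 ^ k')) => hj'.
  exfalso.
  have : a j <= a (2 ^ k' - 1) by apply: (a_le H); lia.
  lia.
have ej : a j = a (2 ^ k') + a (j - 2 ^ k').
  by rewrite -(a_blk H) //; [congr a; lia | lia ..].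
have hz : a (j - 2 ^ k') <= a (2 ^ k' - 1) by apply: (a_le H); lia.
have hi : i < 2 ^ n.
  apply: (a_rev H); have := a_mc H n; have := mmJ n (ltac:(lia) : J <= n); lia.
exists i, j; split; first lia; split; first lia.
rewrite b_low //.
have -> : j = 2 ^ k' + (j - 2 ^ k') by lia.
move: e; rewrite /g => e.
rewrite b_blk //; lia.
Qed.

Lemma b_pf N : three_free (prefix_set b N).
Proof.
move=> x y z [i _ <-] [j _ <-] [l _ <-] xy yz.
apply: b3f; [exact: b_rev i j xy | exact: b_rev j l yz].
Qed.

Lemma b_stanley : stanley b.
Proof.
split; first by rewrite b_low ?(ia0 H) //; exact: exp_pos.
exists (2 ^ n.+1 - 1); split; first by move=> i _; exact: b_inc.
split; first exact: b_pf.
move=> p hp; split; [exact: b_inc | exact: b_pf |].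
move=> x h1 h2 tf.
have [i [j [ij [jp e]]]] := bgap p x hp h1 h2.
have hij : b i < b j := b_lt i j ij.
have hjx : b j < x by have := b_le j p jp; lia.
apply: (tf (b i) (b j) x) => //.
- by left; exists i => //; lia.
- by left; exists j.
- by right.
Qed.

Lemma b_regular : independent a (Posz lam) -> regular b (Posz lam).
Proof.
move=> hind; split; first exact: b_stanley.
exists 0%R, a; split => //.
exists n.+1 => k hk; split.
  have := exp_pos k; lia.
have e0 : ridx k 0 0 = 2 ^ k by rewrite /ridx; lia.
split.
  move=> i hi; have ei : ridx k 0 (Posz i) = 2 ^ k + i by rewrite /ridx; lia.
  rewrite ei e0 b_blk ?b_pow //; lia.
have em1 : ridx k 0 (-1) = 2 ^ k - 1 by rewrite /ridx; have := exp_pos k; lia.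
rewrite e0 em1.
case: k hk e0 em1 => // k' hk e0 em1.
have nk1 : n <= k' by lia.
rewrite bm1 // b_pow; last lia.
have := a_c3 H k' (kK k' nk1); have := U_S k' nk1; have := hchr k' nk1.
lia.
Qed.

End B.


Lemma family (a : nat -> nat) (lam : nat) : independent a (Posz lam) ->
  exists N0, (forall n, N0 <= n -> regular (bseq a lam.+1 n) (Posz lam)) /\
    (forall n n', N0 <= n -> n < n' -> bseq a lam.+1 n <> bseq a lam.+1 n').
Proof.
move=> hind; have [K [k0 H]] := indep_data a lam hind.
set J := K + k0 + a k0 + lam + 1.
have hJK : K <= J by rewrite /J; lia.
have hJg := exp_gt J.
have hJk : k0 < 2 ^ J by rewrite /J in hJg *; lia.
have hJm : a k0 + lam < a (2 ^ J - 1).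
  have := a_ge H (2 ^ J - 1); rewrite /J in hJg *; lia.
exists J.+2; split.
  move=> n hn; apply: (b_regular H J hJK hJk hJm n lam.+1 hn (ltnSn lam) _ hind).
  rewrite /dl.
  have h1 : a (2 ^ J.+2 - 1) <= a (2 ^ n - 1).
    apply: (a_le H); have := exp_mono J.+2 n hn; lia.
  have := a_m H J.+1 (ltac:(lia)); have := a_mc H J.+1.
  have := mm_mono H J hJK hJk hJm J.+1 (leqnSn J).
  lia.
move=> n n' hn hnn' e.
have := congr1 (fun f => f (2 ^ n)) e; rewrite /bseq /=.
have w1 : wgt n (2 ^ n) = 1.
  by have := @wgt_blk n n 0 (leqnn n) (exp_pos n); rewrite addn0 subnn expn0.
have w2 : wgt n' (2 ^ n) = 0 by apply: wgt_low; rewrite ltn_exp2l.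
rewrite w1 w2; lia.
Qed.

Lemma avoid (F : nat -> nat -> nat) N0 :
  (forall n n', N0 <= n -> n < n' -> F n <> F n') ->
  forall l : list (nat -> nat), forall N, N0 <= N ->
  exists n, N <= n /\ ~ List.In (F n) l.
Proof.
move=> inj; elim=> [|f l ih] N hN.
  by exists N; split => // [].
have [n1 [h1 h2]] := ih N hN.
case: (classic (f = F n1)) => hf.
  have [n2 [h3 h4]] := ih n1.+1 (ltac:(lia)).
  exists n2; split; first lia.
  move=> [e|] //; apply: (inj n1 n2) => //; first lia; by rewrite -hf e.
exists n1; split => //; move=> [e|] //.
Qed.

Theorem mainTheorem17 (lam : nat) :
  (~ exists a : nat -> nat, regular a (Posz lam)) \/
  (forall l : list (nat -> nat),
     exists a : nat -> nat, regular a (Posz lam) /\ forall b, List.In b l -> a <> b).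
Proof.
case: (classic (exists a : nat -> nat, regular a (Posz lam))) => h; last by left.
right => l.
case: h => a0 [_ [sigma [a [hind _]]]].
have [N0 [hreg hinj]] := family hind.
have [n [hn hnl]] := @avoid (bseq a lam.+1) N0 hinj l N0 (leqnn N0).
exists (bseq a lam.+1 n); split; first exact: hreg.
by move=> b hb e; apply: hnl; rewrite e.
Qed.
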